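(* Let $p>0$, $M\in\mathbb N_0$, $d_{\max}\in\mathbb N_0$, $c_p=\min\{2^{1-p},1\}$, and $$d(p,M,d_{\max})=1+\bigl\lfloor c_p^{-2}+(c_p^{-1}+c_p^{-2})\,d_{\max}M^p\bigr\rfloor.$$ For every $d\ge d(p,M,d_{\max})$ and every $\omega^0\in\mathbb Z^V$ whose set of broken edges $D=\{\{v,w\}:\omega^0_v\neq\omega^0_w\}$ satisfies $d_D\le d_{\max}$ and whose increments satisfy $\max_{v\sim w}|\omega^0_v-\omega^0_w|\le M$, the configuration $\omega^0$ is stable for the $p$-SOS model on $\mathcal T^d$ with stability constant $c=dc_p^2-1-(c_p+1)d_{\max}M^p>0$.
   Context: $\mathcal T^d=(V,E)$ is the Cayley tree of order $d$ (every vertex has $d+1$ neighbours). For $D\subset E$, $d_D(v)$ is the number of edges of $D$ incident to $v$ and $d_D=\max_v d_D(v)$. For configurations $\omega,\omega^0\in\mathbb Z^V$ differing at finitely many sites, $H(\omega)-H(\omega^0)=\sum_{\{v,w\}\in E}(|\omega_v-\omega_w|^p-|\omega^0_v-\omega^0_w|^p)$ (a finite sum). A configuration $\omega^0\in\mathbb Z^V$ is called stable with stability constant $c>0$ if for all $\omega\in\mathbb Z^V$ differing from $\omega^0$ at finitely many sites, $H(\omega)-H(\omega^0)\ge c\sum_{v}|\omega_v-\omega^0_v|^p$. *)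

(* Defs.v *)
From HB Require Import structures.
From mathcomp Require Import all_boot all_order all_algebra.
From mathcomp Require Import all_classical all_reals all_analysis.
Set Implicit Arguments. Unset Strict Implicit. Unset Printing Implicit Defensive.
Import Order.TTheory GRing.Theory Num.Theory.
Local Open Scope ring_scope.
Local Open Scope classical_set_scope.

(* The Cayley tree T^d of order d: vertices are the reduced words over the
   alphabet 'I_(d+1) = {0,..,d} (no two consecutive letters equal), i.e. the
   Cayley graph of the free product of d+1 copies of Z/2.  The root is the
   empty word; the neighbours of a word u are its parent (u with the last
   letter deleted, if u is nonempty) and its children rcons u a with
   a different from the last letter of u. *)
Definition vtx (d : nat) := seq 'I_d.+1.

Fixpoint reduced (d : nat) (u : vtx d) : bool :=
  match u with
  | [::] => true
  | a :: s => (if s is b :: _ then a != b else true) && reduced s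
  end.

Definition parent (d : nat) (u : vtx d) : vtx d := take (size u).-1 u.

(* Edges of T^d are in bijection with nonempty reduced words u (the edge is
   {parent u, u}). *)
Definition is_edge_child (d : nat) (u : vtx d) : Prop := reduced u /\ u != [::].

Definition neighbours (d : nat) (u : vtx d) : seq (vtx d) :=
  (if u is [::] then [::] else [:: parent u]) ++
  [seq rcons u a | a <- enum 'I_d.+1 & reduced (rcons u a)].

Definition broken_deg (d : nat) (w0 : vtx d -> int) (v : vtx d) : nat :=
  count (fun w => w0 v != w0 w) (neighbours v).

Definition ipow (R : realType) (x : int) (p : R) : R := powR `|(x%:~R : R)| p.

(* H(w) - H(w0), a finite sum when w and w0 differ at finitely many sites *)
Definition Hdiff (R : realType) (p : R) (d : nat) (w w0 : vtx d -> int) : R :=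
  \sum_(u \in [set u : vtx d | is_edge_child u])
     (ipow (w u - w (parent u)) p - ipow (w0 u - w0 (parent u)) p).

Definition finite_diff (d : nat) (w w0 : vtx d -> int) : Prop :=
  finite_set [set v : vtx d | reduced v /\ w v != w0 v].

Definition stable (R : realType) (p : R) (d : nat) (w0 : vtx d -> int) (c : R) : Prop :=
  0 < c /\
  forall w : vtx d -> int, finite_diff w w0 ->
    c * (\sum_(v \in [set v : vtx d | reduced v]) ipow (w v - w0 v) p)
      <= Hdiff p w w0.

Definition c_p (R : realType) (p : R) : R := Num.min (powR 2 (1 - p)) 1.

Definition d_thr (R : realType) (p : R) (M dmax : nat) : int :=
  1 + Num.floor ((c_p p)^-2 + ((c_p p)^-1 + (c_p p)^-2) * dmax%:R * powR M%:R p).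

Definition stab_const (R : realType) (p : R) (M dmax d : nat) : R :=
  d%:R * (c_p p)^+2 - 1 - (c_p p + 1) * dmax%:R * powR M%:R p.

(* Main.v *)
Require Import Defs.
From HB Require Import structures.
From mathcomp Require Import all_boot all_order all_algebra.
From mathcomp Require Import all_classical all_reals all_analysis.
From mathcomp.algebra_tactics Require Import ring lra.
Import Order.TTheory GRing.Theory Num.Theory.
Local Open Scope ring_scope.
Local Open Scope classical_set_scope.

Lemma fsum_list (R : realType) (T : choiceType) (P X : set T) (f : T -> R) :
  finite_set X -> (forall x, P x -> f x != 0 -> X x) ->
  \sum_(x \in P) f x = \sum_(x <- finmap.enum_fset (fset_set X)) (if x \in P then f x else 0).
Proof.
move=> fX hX.
rewrite fsbig_mkcond -(fsbig_widen X setT) //; last first.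
  move=> x [_ nX] /=; rewrite /patch; case: ifPn => // /set_mem Px.
  have [//|fx] := eqVneq (f x) 0.
  by case: nX; apply: hX.
rewrite (fsbig_finite _ _ fX).
by apply: eq_bigr => x _; rewrite /patch.
Qed.

Section words.
Context {d : nat}.
Implicit Types (v u : vtx d) (a : 'I_d.+1).

Lemma reduced_rcons v a :
  reduced (rcons v a) = reduced v && ((v == [::]) || (last a v != a)).
Proof.
elim: v => [|b s IH] //=.
case: s IH => [|c s] IH /=; first by rewrite andbT.
move: IH => /= ->; by rewrite /= !andbA.
Qed.

Lemma reduced_rconsW v a : reduced (rcons v a) -> reduced v.
Proof. by rewrite reduced_rcons => /andP[]. Qed.

Lemma parent_rcons v a : parent (rcons v a) = v.
Proof. by rewrite /parent size_rcons /= -cats1 take_size_cat. Qed.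

Lemma reduced_parent u : reduced u -> reduced (parent u).
Proof.
case: u => [//|x s]; rewrite lastI parent_rcons; exact: reduced_rconsW.
Qed.

Lemma children_ge (R : realType) v (c : R) : reduced v -> 0 <= c ->
  d%:R * c <= \sum_(a < d.+1) (if reduced (rcons v a) then c else 0).
Proof.
move=> rv c0; case: v rv => [|b s] rv.
  under eq_bigr do rewrite /= .
  by rewrite sumr_const card_ord -[c *+ d.+1]mulr_natl ler_wpM2r // ler_nat.
rewrite (eq_bigr (fun a => if a != last b s then c else 0)); last first.
  by move=> a _; rewrite reduced_rcons rv /= eq_sym.
rewrite -big_mkcond /= sumr_const cardC1 card_ord /= mulr_natl.
done.
Qed.

Lemma rcons_neighbour v a : reduced (rcons v a) -> rcons v a \in neighbours v.
Proof.
move=> h; rewrite /neighbours mem_cat; apply/orP; right.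
by apply: map_f; rewrite mem_filter h mem_enum.
Qed.

Lemma RE (R : realType) (K : vtx d -> R) (X : set (vtx d)) : finite_set X ->
  (forall v a, reduced (rcons v a) -> K (rcons v a) != 0 -> X v) ->
  \sum_(u \in [set u : vtx d | is_edge_child u]) K u =
  \sum_(v <- finmap.enum_fset (fset_set X))
     \sum_(a < d.+1) (if reduced (rcons v a) then K (rcons v a) else 0).
Proof.
move=> fX hX.
rewrite (reindex_fsbig (fun x : vtx d * 'I_d.+1 => rcons x.1 x.2)
   [set x | reduced (rcons x.1 x.2)]); last first.
  split.
  - move=> [v a] /= h; split => //; by case: v {h}.
  - move=> [v a] [v' a'] _ _ /= /rcons_inj; done.
  - move=> [|x s] [] // r _; exists (belast x s, last x s) => /=;
    by rewrite -lastI.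
rewrite fsbig_mkcond -(fsbig_widen (X `*` setT) setT) //; last first.
  move=> [v a] [_ /= nX]; rewrite /patch; case: ifPn => // Pva.
  move/set_mem: Pva => /= Pva.
  have [//|kx] := eqVneq (K (rcons v a)) 0.
  by exfalso; apply: nX; split; [exact: (hX v a Pva kx)|].
pose G := fun v a => if reduced (rcons v a) then K (rcons v a) else 0.
rewrite (eq_fsbigr (fun x => G x.1 x.2)); last first.
  move=> [v a] _; rewrite /patch /G /=; case: ifPn => [/set_mem -> // | h].
  case: ifPn => // r; exfalso; move/negP: h; apply; exact/mem_set.
rewrite -(pair_fsbig _ G) //; last exact: finite_finset.
rewrite (fsbig_finite _ _ fX); apply: eq_bigr => v _.
rewrite (fsbig_fwiden (enum 'I_d.+1)) //.
- by rewrite big_enum.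
- by move=> a _ /=; rewrite mem_enum.
- exact: enum_uniq.
- by move=> a [_ /(_ I)].
Qed.

Lemma count_natr (R : realType) (T : Type) (P : pred T) (s : seq T) :
  (count P s)%:R = \sum_(x <- s) ((P x)%:R : R).
Proof.
elim: s => [|x s IH]; first by rewrite big_nil.
by rewrite big_cons /= natrD IH.
Qed.

Lemma bdeg_eq (R : realType) (w0 : vtx d -> int) v :
  ((broken_deg w0 v)%:R : R) =
  (if v != [::] then ((w0 v != w0 (parent v))%:R : R) else 0)
   + \sum_(a < d.+1) (if reduced (rcons v a) then ((w0 (rcons v a) != w0 v)%:R : R) else 0).
Proof.
rewrite /broken_deg /neighbours count_cat natrD; congr (_ + _).
  by case: v => [|x s] //=; rewrite addn0.
rewrite count_map count_filter count_natr big_enum /=.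
apply: eq_bigr => a _ /=.
by rewrite eq_sym; case: (reduced (rcons v a)); rewrite ?andbT ?andbF.
Qed.
End words.

Section analytic.
Variable R : realType.
Implicit Types p s t : R.

Lemma half_convex p s t : 1 <= p -> 0 <= s -> 0 <= t ->
  powR (2^-1 * s + 2^-1 * t) p <= 2^-1 * powR s p + 2^-1 * powR t p.
Proof.
move=> p1 s0 t0.
rewrite {2 4}(_ : 2^-1 = 1 - 2^-1); last by rewrite {2}(splitr 1) div1r addrK.
by apply: (convex_powR p1 (Itv01 _ _)) => //=;
  rewrite ?inE/= ?in_itv/= ?invr_ge0// ?invf_le1 ?ler1n ?s0 ?t0.
Qed.

Lemma powR_half p : powR (2^-1) p = (powR 2 p)^-1.
Proof.
have h : 1 = powR 2 p * powR (2^-1) p.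
  by rewrite -powRM ?invr_ge0 // divff ?pnatr_eq0 // powR1.
have h2 : powR 2 p != 0 by rewrite gt_eqF // powR_gt0.
apply: (@mulfI _ (powR 2 p)) => //.
by rewrite -h divff.
Qed.

Lemma powR_sub p s t : 0 < p -> p <= 1 -> 0 <= s -> 0 <= t ->
  powR (s + t) p <= powR s p + powR t p.
Proof.
move=> p0 p1 s0 t0.
have [->|sn] := eqVneq s 0; first by rewrite add0r powR0 ?gt_eqF // add0r.
have [->|tn] := eqVneq t 0; first by rewrite addr0 powR0 ?gt_eqF // addr0.
have sp : 0 < s by rewrite lt_neqAle eq_sym sn.
have tp : 0 < t by rewrite lt_neqAle eq_sym tn.
set u := s + t.
have up : 0 < u by rewrite addr_gt0.
have hx x : 0 < x -> x <= u -> x / u * powR u p <= powR x p.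
  move=> x0 xu.
  have e2 : x = x / u * u by rewrite divfK ?gt_eqF.
  rewrite {2}e2 powRM ?divr_ge0 ?(ltW up) ?(ltW x0) //.
  rewrite ler_wpM2r ?powR_ge0 // ger1_powR // divr_gt0 //=.
  by rewrite ler_pdivrMr // mul1r.
have e : powR u p = (s / u + t / u) * powR u p.
  by rewrite -mulrDl divff ?gt_eqF // mul1r.
rewrite {1}e mulrDl lerD // hx //.
- by rewrite /u lerDl ltW.
- by rewrite /u lerDr ltW.
Qed.

Lemma cp_gt0 p : 0 < c_p p.
Proof. by rewrite /c_p lt_min ltr01 andbT powR_gt0. Qed.

Lemma cp_le1 p : c_p p <= 1.
Proof. by rewrite /c_p ge_min lexx orbT. Qed.

Lemma cp_le p : c_p p <= powR 2 (1 - p).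
Proof. by rewrite /c_p ge_min lexx. Qed.

Lemma key_ineq p s t : 0 < p -> 0 <= s -> 0 <= t ->
  c_p p * powR (s + t) p <= powR s p + powR t p.
Proof.
move=> p0 s0 t0.
have st0 : 0 <= s + t by rewrite addr_ge0.
case: (lerP 1 p) => p1.
  apply: le_trans (_ : powR 2 (1 - p) * powR (s + t) p <= _).
    by rewrite ler_wpM2r ?powR_ge0 ?cp_le.
  rewrite powRD ?pnatr_eq0 ?implybT // powRr1 // powRN -powR_half.
  rewrite -mulrA -powRM ?invr_ge0 // mulrDr.
  have := half_convex p s t p1 s0 t0.
  move=> h; apply: le_trans (ler_wpM2l _ h) _ => //.
  by rewrite mulrDr !mulrA divff ?pnatr_eq0 // !mul1r.
apply: le_trans (_ : 1 * powR (s + t) p <= _).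
  by rewrite ler_wpM2r ?powR_ge0 ?cp_le1.
rewrite mul1r; apply: powR_sub => //; exact: ltW.
Qed.

Lemma ipow_ge0 (z : int) p : 0 <= ipow z p.
Proof. exact: powR_ge0. Qed.

Lemma ipow0 p : 0 < p -> ipow 0 p = 0.
Proof. by move=> p0; rewrite /ipow normr0 powR0 // gt_eqF. Qed.

Lemma norm_intr (z : int) : `|(z%:~R : R)| = (`|z|%:~R : R).
Proof. by rewrite -intr_norm. Qed.

Lemma ipow_ge1 (z : int) p : 0 < p -> z != 0 -> 1 <= ipow z p.
Proof.
move=> p0 z0; rewrite /ipow.
have h : 1 <= `|(z%:~R : R)|.
  by apply: norm_intr_ge1; [exact: intr_int | rewrite intr_eq0].
apply: le_trans (_ : powR 1 p <= _); first by rewrite powR1.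
apply: ge0_ler_powR => //; first exact: ltW.
  by rewrite nnegrE.
Qed.

Lemma ipow_leM (z : int) (M : nat) p : 0 < p -> `|z| <= M%:Z ->
  ipow z p <= powR M%:R p.
Proof.
move=> p0 zM; rewrite /ipow; apply: ge0_ler_powR => //; first exact: ltW.
  by rewrite nnegrE.
by rewrite -intr_norm -[M%:R]/((M%:Z)%:~R) ler_int.
Qed.

Lemma key_int p (x y : int) : 0 < p ->
  c_p p * ipow y p <= ipow (x - y) p + ipow x p.
Proof.
move=> p0; rewrite /ipow.
have h : `|(y%:~R : R)| <= `|((x - y)%:~R : R)| + `|(x%:~R : R)|.
  have -> : (y%:~R : R) = x%:~R - (x - y)%:~R by rewrite rmorphB /=; ring.
  by rewrite [X in _ <= X]addrC; exact: ler_normB.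
apply: le_trans (key_ineq _ _ _ p0 (normr_ge0 _) (normr_ge0 _)).
rewrite ler_wpM2l ?(ltW (cp_gt0 p)) //.
apply: ge0_ler_powR => //; first exact: ltW.
- by rewrite nnegrE.
Qed.

Lemma edge_ineq p (M : nat) (a0 x y : int) :
  0 < p -> `|a0| <= M%:Z ->
  c_p p * ipow y p - ipow x p - (c_p p + 1) * powR M%:R p *
    ((a0 != 0)%:R * ipow x p + (a0 != 0)%:R * ipow y p)
  <= ipow (a0 + x - y) p - ipow a0 p.
Proof.
move=> p0 aM.
have c0 := cp_gt0 p; have c1 := cp_le1 p.
have Nx := ipow_ge0 x p; have Ny := ipow_ge0 y p.
have [->|an] := eqVneq a0 0.
  rewrite /= !mul0r addr0 mulr0 subr0 add0r ipow0 // subr0.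
  by rewrite lerBlDr key_int.
rewrite /= !mul1r.
have Ma : 1 <= powR M%:R p.
  apply: le_trans (ipow_leM a0 M p p0 aM); exact: ipow_ge1.
have Ta := ipow_leM a0 M p p0 aM.
have [->|xy] := eqVneq x y.
  rewrite addrK subrr.
  have : 0 <= (c_p p + 1) * powR M%:R p * (ipow y p + ipow y p).
    by rewrite !mulr_ge0 // ?addr_ge0 // ltW // (lt_le_trans ltr01 Ma).
  nra.
have Nxy : 1 <= ipow x p + ipow y p.
  have [x0|x0] := eqVneq x 0.
    have y0 : y != 0 by rewrite -x0 eq_sym.
    rewrite x0 ipow0 // add0r; exact: ipow_ge1.
  rewrite -[1]addr0 lerD //; exact: ipow_ge1.
have T0 := ipow_ge0 (a0 + x - y) p.
set m := powR M%:R p in Ma Ta *.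
set c := c_p p in c0 c1 *.
set X := ipow x p in Nx Nxy *.
set Y := ipow y p in Ny Nxy *.
have h1 : c * Y <= c * (m * Y).
  by rewrite ler_wpM2l ?(ltW c0) // ler_peMl.
have h2 : 0 <= c * (m * X) by rewrite !mulr_ge0 // ?(ltW c0) // (le_trans ler01 Ma).
have h3 : m <= m * (X + Y) by rewrite ler_peMr // (le_trans ler01 Ma).
have -> : (c + 1) * m * (X + Y) = c * (m * X) + c * (m * Y) + m * (X + Y) by ring.
lra.
Qed.

End analytic.

Lemma stab_pos (R : realType) (p : R) (M dmax d : nat) :
  0 < p ->
  d_thr p M dmax <= d%:Z -> 0 < stab_const p M dmax d.
Proof.
move=> p0 hd.
have c0 := cp_gt0 _ p; have c1 := cp_le1 _ p.
move: hd; rewrite /d_thr /stab_const.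
set c := c_p p in c0 c1 *.
set Mp := powR M%:R p.
have Mp0 : 0 <= Mp := powR_ge0 _ _.
set Xv := (c^-2 + (c^-1 + c^-2) * dmax%:R * Mp) => hd.
have hX : Xv < d%:R.
  apply: lt_le_trans (floorD1_gt Xv) _.
  by rewrite -[d%:R]/((d%:Z)%:~R) ler_int addrC.
have e : Xv * c^+2 = 1 + (c + 1) * dmax%:R * Mp.
  by rewrite /Xv; field; rewrite gt_eqF.
have c2 : 0 < c ^+ 2 by rewrite exprn_gt0.
have := hX; rewrite -(ltr_pM2r c2) e => h.
lra.
Qed.

Lemma lin4 (R : realType) (I : Type) (s : seq I) (c k : R) (A B C D : I -> R) :
  \sum_(i <- s) (c * A i - B i - k * (C i + D i)) =
  c * \sum_(i <- s) A i - \sum_(i <- s) B i - k * (\sum_(i <- s) C i + \sum_(i <- s) D i).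
Proof.
elim: s => [|x s IH]; first by rewrite !big_nil; ring.
rewrite !big_cons IH; ring.
Qed.

Theorem mainTheorem4 (R : realType) (p : R) (M dmax d : nat)
  (w0 : vtx d -> int) :
  0 < p ->
  d_thr p M dmax <= d%:Z ->
  (forall v : vtx d, reduced v -> (broken_deg w0 v <= dmax)%N) ->
  (forall v w : vtx d, reduced v -> w \in neighbours v ->
     `|w0 v - w0 w| <= M%:Z) ->
  stable p w0 (stab_const p M dmax d).
Proof.
move=> p0 hd hdeg hM; split; first exact: stab_pos.
move=> w fd.
have c0 := cp_gt0 _ p; have c1 := cp_le1 _ p.
rewrite /stab_const /Hdiff.
set c := c_p p in c0 c1 *.
set Mp := powR M%:R p.
have Mp0 : 0 <= Mp := powR_ge0 _ _.
pose S := [set v : vtx d | reduced v /\ w v != w0 v].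
have fS : finite_set S by exact: fd.
pose X := S `|` (@parent d) @` S.
have fX : finite_set X by rewrite /X finite_setU; split => //; exact: finite_image.
have Xred v : X v -> reduced v.
  by move=> [[]//|[u [ru _] <-]]; exact: reduced_parent.
set r := finmap.enum_fset (fset_set X).
have inr v : v \in r -> X v.
  move=> vr; have h := in_fset_set fX v.
  have vr' : is_true (@in_mem _ v (@mem _ (finmap.finSetPredType _) (fset_set X))) := vr.
  by rewrite h in vr'; move/set_mem: vr'.
pose N u := ipow (w u - w0 u) p.
have N0 u : 0 <= N u := ipow_ge0 _ _ _.
have NS v : reduced v -> N v != 0 -> S v.
  move=> rv Nn; split => //; apply/negP => /eqP e; move: Nn.
  by rewrite /N e subrr ipow0 // eqxx.
have eL : \sum_(v \in [set v : vtx d | reduced v]) ipow (w v - w0 v) p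
          = \sum_(v <- r) N v.
  rewrite (@fsum_list R _ _ X _ fX); last by move=> v rv Nn; left; exact: NS.
  apply: eq_big_seq => v vr; rewrite ifT //; apply/mem_set; exact: Xred (inr v vr).
rewrite eL.
have eH : \sum_(u \in [set u : vtx d | is_edge_child u])
     (ipow (w u - w (parent u)) p - ipow (w0 u - w0 (parent u)) p) =
   \sum_(v <- r) \sum_(a < d.+1) (if reduced (rcons v a) then
     (ipow (w (rcons v a) - w v) p - ipow (w0 (rcons v a) - w0 v) p) else 0).
  rewrite (@RE d R _ X fX); last first.
    move=> v a ra; rewrite parent_rcons => Kn; have rv := reduced_rconsW _ _ ra.
    case: (boolP (w v == w0 v)) => [/eqP ev | nv]; last by left.
    case: (boolP (w (rcons v a) == w0 (rcons v a))) => [/eqP eu | nu].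
      by move: Kn; rewrite ev eu subrr eqxx.
    by right; exists (rcons v a) => //; exact: parent_rcons.
  by apply: eq_bigr => v _; apply: eq_bigr => a _; rewrite parent_rcons.
rewrite eH.
pose b v a := ((w0 (rcons v a) != w0 v)%:R : R).
pose k := (c + 1) * Mp.
pose L v a := c * N v - N (rcons v a) - k * (b v a * N (rcons v a) + b v a * N v).
have low : \sum_(v <- r) \sum_(a < d.+1) (if reduced (rcons v a) then L v a else 0)
  <= \sum_(v <- r) \sum_(a < d.+1) (if reduced (rcons v a) then
     (ipow (w (rcons v a) - w v) p - ipow (w0 (rcons v a) - w0 v) p) else 0).
  rewrite big_seq [X in _ <= X]big_seq; apply: ler_sum => v vr.
  apply: ler_sum => a _; case: ifP => ra //.
  have aM : `|w0 (rcons v a) - w0 v| <= M%:Z.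
    by rewrite distrC; apply: hM (Xred _ (inr _ vr)) (rcons_neighbour _ _ ra).
  have := edge_ineq R p M _ (w (rcons v a) - w0 (rcons v a)) (w v - w0 v) p0 aM.
  have -> : w0 (rcons v a) - w0 v + (w (rcons v a) - w0 (rcons v a)) - (w v - w0 v)
            = w (rcons v a) - w v by ring.
  by rewrite subr_eq0.
pose A v := \sum_(a < d.+1) (if reduced (rcons v a) then N v else 0).
pose B v := \sum_(a < d.+1) (if reduced (rcons v a) then N (rcons v a) else 0).
pose C v := \sum_(a < d.+1) (if reduced (rcons v a) then b v a * N (rcons v a) else 0).
pose D v := \sum_(a < d.+1) (if reduced (rcons v a) then b v a * N v else 0).
have dec : \sum_(v <- r) \sum_(a < d.+1) (if reduced (rcons v a) then L v a else 0)
   = c * \sum_(v <- r) A v - \sum_(v <- r) B v - k * (\sum_(v <- r) C v + \sum_(v <- r) D v).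
  rewrite -lin4; apply: eq_bigr => v _.
  rewrite /A /B /C /D -lin4; apply: eq_bigr => a _.
  by case: ifP => _; rewrite /L; ring.
set Nt := \sum_(v <- r) N v.
have Nt0 : 0 <= Nt by rewrite sumr_ge0.
have hA : d%:R * Nt <= \sum_(v <- r) A v.
  rewrite /Nt mulr_sumr big_seq [X in _ <= X]big_seq; apply: ler_sum => v vr.
  exact: children_ge (Xred _ (inr _ vr)) (N0 v).
have hB : \sum_(v <- r) B v <= Nt.
  have e1 : \sum_(u \in [set u : vtx d | is_edge_child u]) N u = \sum_(v <- r) B v.
    rewrite (@RE d R _ X fX) //.
    move=> v a ra Nn; right; exists (rcons v a); last exact: parent_rcons.
    exact: NS.
  rewrite -e1 (@fsum_list R _ _ X _ fX); last first.
    by move=> u [ru _] Nn; left; exact: NS.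
  apply: ler_sum => v _; case: ifP => _ //.
have hCD : \sum_(v <- r) C v + \sum_(v <- r) D v <= dmax%:R * Nt.
  pose K u := (w0 u != w0 (parent u))%:R * N u.
  have e1 : \sum_(u \in [set u : vtx d | is_edge_child u]) K u = \sum_(v <- r) C v.
    rewrite (@RE d R _ X fX).
      by apply: eq_bigr => v _; apply: eq_bigr => a _; rewrite /K parent_rcons.
    move=> v a ra Kn; right; exists (rcons v a); last exact: parent_rcons.
    apply: NS => //; apply: contraNneq Kn; rewrite /K => ->; by rewrite mulr0.
  rewrite -e1 (@fsum_list R _ _ X _ fX); last first.
    move=> u [ru _] Kn; left; apply: NS => //.
    by apply: contraNneq Kn; rewrite /K => ->; rewrite mulr0.
  rewrite -big_split /= /Nt mulr_sumr big_seq [X in _ <= X]big_seq.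
  apply: ler_sum => v vr.
  have rv := Xred _ (inr _ vr).
  have ec : (v \in [set u : vtx d | is_edge_child u]) = (v != [::]).
    apply/idP/idP => [/set_mem [] //| h]; apply/mem_set; by split.
  have eD : D v = (\sum_(a < d.+1) (if reduced (rcons v a)
       then ((w0 (rcons v a) != w0 v)%:R : R) else 0)) * N v.
    rewrite /D mulr_suml; apply: eq_bigr => a _; case: ifP => _ //; by rewrite mul0r.
  have := hdeg v rv; rewrite -(ler_nat R) => hdv.
  apply: le_trans (_ : N v * (broken_deg w0 v)%:R <= _); last first.
    by rewrite mulrC ler_wpM2r.
  rewrite (bdeg_eq R w0 v) ec eD /K.
  case: ifP => _; rewrite ?add0r; lra.
apply: le_trans low; rewrite dec.
have k0 : 0 <= k by rewrite /k mulr_ge0 // addr_ge0 // ltW.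
have h1 : c * (d%:R * Nt) <= c * \sum_(v <- r) A v by rewrite ler_wpM2l // ltW.
have h2 : k * (\sum_(v <- r) C v + \sum_(v <- r) D v) <= k * (dmax%:R * Nt)
  by rewrite ler_wpM2l.
have h3 : 0 <= d%:R * c * (1 - c) * Nt.
  by rewrite !mulr_ge0 // ?subr_ge0 // ltW.
have -> : (d%:R * c ^+ 2 - 1 - (c + 1) * dmax%:R * Mp) * Nt
   = c * (d%:R * Nt) - Nt - k * (dmax%:R * Nt) - d%:R * c * (1 - c) * Nt
  by rewrite /k; ring.
lra.
Qed.
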